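(* Let $\Gamma=\langle V,(w_u)_{u\in V},\alpha,1\rangle$ be a celebrity game with critical distance $\beta=1$. Then $PoA(\Gamma)\le 2$. Moreover, for any two Nash equilibria $S,S'$ of $\Gamma$, $C(S)\le 2\,C(S')$.
   Context: A celebrity game $\Gamma=\langle V,(w_u)_{u\in V},\alpha,\beta\rangle$ consists of a set of players $V=\{1,\dots,n\}$, celebrity weights $w_u>0$, a link cost $\alpha>0$ and a critical distance $\beta$ with $1\le\beta\le n-1$. A strategy of player $u$ is a set $S_u\subseteq V\setminus\{u\}$; a strategy profile is $S=(S_1,\dots,S_n)$; its outcome graph $G[S]$ is the undirected graph on $V$ with edge set $\{\{u,v\}: u\in S_v\text{ or }v\in S_u\}$. With $d_G$ the graph distance (infinite between different connected components), the cost of player $u$ is $c_u(S)=\alpha|S_u|+\sum_{v:\,d_{G[S]}(u,v)>\beta}w_v$ and the social cost is $C(S)=\sum_{u\in V}c_u(S)$. $S$ is a Nash equilibrium if no player can strictly decrease its cost by changing only its own strategy. $\mathrm{opt}(\Gamma)=\min_S C(S)$ and $PoA(\Gamma)=\max_{S\text{ Nash equilibrium}}C(S)/\mathrm{opt}(\Gamma)$. *)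

(* Defs.v *)
From mathcomp Require Import all_boot all_order all_algebra.
Set Implicit Arguments. Unset Strict Implicit. Unset Printing Implicit Defensive.
Import Order.TTheory GRing.Theory Num.Theory.
Local Open Scope ring_scope.

Definition profile (n : nat) := {ffun 'I_n -> {set 'I_n}}.

Definition valid_profile n (S : profile n) : bool := [forall u, u \notin S u].

Definition adj n (S : profile n) (u v : 'I_n) : bool := (u \in S v) || (v \in S u).

(* within S k u v  <=>  d_{G[S]}(u,v) <= k. *)
Fixpoint within n (S : profile n) (k : nat) (u v : 'I_n) : bool :=
  match k with
  | 0 => u == v
  | k'.+1 => within S k' u v || [exists x, within S k' u x && adj S x v]
  end.

Definition player_cost (R : realFieldType) n (w : 'I_n -> R) (alpha : R)
  (beta : nat) (S : profile n) (u : 'I_n) : R :=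
  alpha * #|S u|%:R + \sum_(v | ~~ within S beta u v) w v.

Definition social_cost (R : realFieldType) n (w : 'I_n -> R) (alpha : R)
  (beta : nat) (S : profile n) : R :=
  \sum_(u : 'I_n) player_cost w alpha beta S u.

Definition deviate n (S : profile n) (u : 'I_n) (s : {set 'I_n}) : profile n :=
  [ffun v => if v == u then s else S v].

Definition is_NE (R : realFieldType) n (w : 'I_n -> R) (alpha : R)
  (beta : nat) (S : profile n) : Prop :=
  valid_profile S /\
  forall (u : 'I_n) (s : {set 'I_n}), u \notin s ->
    player_cost w alpha beta S u <= player_cost w alpha beta (deviate S u s) u.

(* The empty profile (valid), used as the seed of the minimum. *)
Definition empty_profile n : profile n := [ffun => set0].

Definition opt (R : realFieldType) n (w : 'I_n -> R) (alpha : R) (beta : nat) : R :=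
  \big[Num.min/social_cost w alpha beta (empty_profile n)]_(S : profile n | valid_profile S)
     social_cost w alpha beta S.

(* Main.v *)
Require Import Defs.
From mathcomp Require Import all_boot all_order all_algebra.
From mathcomp Require Import lra.
Import Order.TTheory GRing.Theory Num.Theory.
Local Open Scope ring_scope.

Section H.
Variables (R : realFieldType) (n : nat) (w : 'I_n -> R) (alpha : R).

Lemma within1 (S : profile n) u v : within S 1 u v = (u == v) || adj S u v.
Proof.
rewrite /=; congr (_ || _); apply/existsP/idP => [[x /andP[/eqP-> //]]|h].
by exists u; rewrite eqxx.
Qed.

Definition fc (S : profile n) u v :=
  (if v \in S u then alpha else 0) + (if (u == v) || adj S u v then 0 else w v).

Lemma pc_sum S u : player_cost w alpha 1 S u = \sum_v fc S u v.
Proof.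
rewrite /player_cost /fc big_split /=; congr (_ + _).
  by rewrite -big_mkcond /= sumr_const mulr_natr.
rewrite big_mkcond; apply: eq_bigr => v _; have := within1 S u v; rewrite /= => ->; by case: ((u == v) || adj S u v).
Qed.

Definition hc (S : profile n) u (s : {set 'I_n}) v :=
  (if v \in s then alpha else 0) +
  (if (u == v) || (u \in S v) || (v \in s) then 0 else w v).

Lemma pc_dev S u s : player_cost w alpha 1 (deviate S u s) u = \sum_v hc S u s v.
Proof.
rewrite pc_sum; apply: eq_bigr => v _; rewrite /fc /hc /adj !ffunE.
rewrite eqxx; case: (eqVneq u v) => [->|nuv]; first by [].
by rewrite -orbA.
Qed.

Lemma pc_S S u : player_cost w alpha 1 S u = \sum_v hc S u (S u) v.
Proof.
rewrite pc_sum; apply: eq_bigr => v _; rewrite /fc /hc /adj.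
by case: (u == v).
Qed.

Lemma ne_step (S : profile n) (u : 'I_n) (s : {set 'I_n}) (v0 : 'I_n) : is_NE w alpha 1 S -> u \notin s ->
  (forall v, v != v0 -> (v \in s) = (v \in S u)) ->
  hc S u (S u) v0 <= hc S u s v0.
Proof.
move=> [_ hne] us hs; have := hne u s us.
rewrite pc_S pc_dev (bigD1 v0) //= [X in _ <= X](bigD1 v0) //=.
rewrite (eq_bigr (fun v => hc S u s v)); first by rewrite lerD2r.
by move=> v hv; rewrite /hc hs.
Qed.

Hypothesis halpha : 0 < alpha.

Lemma ne_rem S u v : is_NE w alpha 1 S -> v \in S u ->
  u \notin S v /\ alpha <= w v.
Proof.
move=> hN hv; have [hval _] := hN.
have uu : u \notin S u by move/forallP: hval.
have nuv : u != v by apply/eqP => e; move: hv; rewrite -e (negbTE uu).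
have := @ne_step S u (S u :\ v) v hN.
have h1 : u \notin S u :\ v by rewrite in_setD1 negb_and uu orbT.
have h2 : forall x, x != v -> (x \in S u :\ v) = (x \in S u).
  by move=> x hx; rewrite in_setD1 hx.
move=> /(_ h1 h2).
rewrite /hc hv setD11 (negbTE nuv) /= add0r.
case: (u \in S v) => /=; rewrite ?addr0 => H; first by move: H; rewrite leNgt halpha.
by [].
Qed.

Lemma ne_add S u v : is_NE w alpha 1 S -> u != v -> v \notin S u -> u \notin S v ->
  w v <= alpha.
Proof.
move=> hN nuv hv hu; have [hval _] := hN.
have uu : u \notin S u by move/forallP: hval.
have := @ne_step S u (v |: S u) v hN.
have h1 : u \notin v |: S u by rewrite in_setU1 negb_or nuv uu.
have h2 : forall x, x != v -> (x \in v |: S u) = (x \in S u).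
  by move=> x hx; rewrite in_setU1 (negbTE hx).
move=> /(_ h1 h2).
by rewrite /hc (negbTE hv) setU11 (negbTE nuv) (negbTE hu) /= add0r !addr0.
Qed.

Definition mm (u v : 'I_n) : R := if u == v then 0 else Num.min alpha (w u + w v).

Hypothesis hw : forall u, 0 < w u.

Definition gc S u v := fc S u v + fc S v u.

Lemma gc_lb S u v : mm u v <= gc S u v.
Proof.
rewrite /mm /gc /fc /adj; case: (eqVneq u v) => [->|nuv].
  rewrite /=; case: ifP => _; rewrite ?add0r ?addr0 //; by rewrite addr_ge0 // ltW.
have hu := hw u; have hv := hw v.
case: (v \in S u); case: (u \in S v) => /=; rewrite ge_min; apply/orP;
  [left|left|left|right]; have ha := halpha; lra.
Qed.

Lemma min2 (x y z : R) : (x <= y -> z <= 2 * x) -> (y <= x -> z <= 2 * y) ->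
  z <= 2 * Num.min x y.
Proof.
case: (leP x y) => h h1 h2; [exact: h1 | exact: h2 (ltW h)].
Qed.

Lemma gc_ub S u v : is_NE w alpha 1 S -> gc S u v <= 2 * mm u v.
Proof.
move=> hN; rewrite /mm /gc /fc /adj; case: (eqVneq u v) => [->|nuv].
  have [hval _] := hN; have uu : v \notin S v by move/forallP: hval.
  by rewrite /= (negbTE uu) !addr0 mulr0.
have nvu : v != u by rewrite eq_sym.
rewrite /=.
case hvu: (v \in S u); case huv: (u \in S v) => /=.
- by have [] := @ne_rem S u v hN hvu; rewrite huv.
- have [_ h] := @ne_rem S u v hN hvu; have := hw u => hu0.
  apply: min2 => ?; have ha := halpha; lra.
- have [_ h] := @ne_rem S v u hN huv; have := hw v => hv0.
  apply: min2 => ?; have ha := halpha; lra.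
- have h1 := @ne_add S u v hN nuv (negbT hvu) (negbT huv).
  have h2 := @ne_add S v u hN nvu (negbT huv) (negbT hvu).
  have hu0 := hw u; have hv0 := hw v; apply: min2 => ?; have ha := halpha; lra.
Qed.

Lemma sc2 S : 2 * social_cost w alpha 1 S = \sum_u \sum_v gc S u v.
Proof.
rewrite /social_cost /gc mulr2n mulrDl mul1r.
rewrite [RHS](eq_bigr (fun u => \sum_v fc S u v + \sum_v fc S v u)); last first.
  by move=> u _; rewrite big_split.
rewrite [RHS]big_split /=.
have E : \sum_u \sum_v fc S v u = \sum_u \sum_v fc S u v by rewrite exchange_big.
rewrite E; congr (_ + _); by apply: eq_bigr => u _; rewrite pc_sum.
Qed.

Definition LB := \sum_u \sum_v mm u v.

Lemma sc_lb S : LB <= 2 * social_cost w alpha 1 S.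
Proof. rewrite sc2; apply: ler_sum => u _; apply: ler_sum => v _; exact: gc_lb. Qed.

Lemma sc_ub S : is_NE w alpha 1 S -> social_cost w alpha 1 S <= LB.
Proof.
move=> hN; have : 2 * social_cost w alpha 1 S <= 2 * LB.
  rewrite sc2 /LB mulr_sumr; apply: ler_sum => u _; rewrite mulr_sumr.
  apply: ler_sum => v _; exact: gc_ub.
by rewrite ler_pM2l.
Qed.

Lemma mm_ge0 u v : 0 <= mm u v.
Proof.
rewrite /mm; case: ifP => // _; rewrite le_min; have := hw u; have := hw v.
move=> *; apply/andP; split; have ha := halpha; lra.
Qed.

Lemma LB_gt0 : (2 <= n)%N -> 0 < LB.
Proof.
move=> hn; pose a : 'I_n := Ordinal (leq_trans (isT : (0 < 2)%N) hn).
pose b : 'I_n := Ordinal hn.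
rewrite /LB (bigD1 a) //= (bigD1 b) //=.
have hab : mm a b > 0.
  rewrite /mm; have -> : (a == b) = false by [].
  rewrite lt_min halpha /=; have := hw a; have := hw b; move=> *; have ha := halpha; lra.
have h1 : 0 <= \sum_(i | i != b) mm a i by apply: sumr_ge0 => *; exact: mm_ge0.
have h2 : 0 <= \sum_(i | i != a) \sum_v mm i v.
  by apply: sumr_ge0 => *; apply: sumr_ge0 => *; exact: mm_ge0.
lra.
Qed.

Lemma opt_lb : LB <= 2 * opt w alpha 1.
Proof.
rewrite /opt; elim/big_rec: _ => [|S x _ hx]; first exact: sc_lb.
case: (leP (social_cost w alpha 1 S) x) => h.
  exact: sc_lb.
by [].
Qed.

End H.

Theorem theorem5 (R : realFieldType) (n : nat) (w : 'I_n -> R) (alpha : R)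
  (hn : (2 <= n)%N) (hw : forall u, 0 < w u) (halpha : 0 < alpha) :
  (forall S : profile n, is_NE w alpha 1 S ->
      social_cost w alpha 1 S / opt w alpha 1 <= 2) /\
  (forall S S' : profile n, is_NE w alpha 1 S -> is_NE w alpha 1 S' ->
      social_cost w alpha 1 S <= 2 * social_cost w alpha 1 S').
Proof.
have hL := @LB_gt0 _ _ _ _ halpha hw hn.
split.
  move=> S hN; have h1 := @sc_ub _ _ _ _ halpha hw S hN; have h2 := @opt_lb _ _ _ _ halpha hw.
  have hop : 0 < opt w alpha 1 by lra.
  rewrite ler_pdivrMr //; have ha := halpha; lra.
move=> S S' hN hN'; have h1 := @sc_ub _ _ _ _ halpha hw S hN; have h2 := @sc_lb _ _ _ _ halpha hw S'.
lra.
Qed.
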